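(* Let $\kappa\in\mathbb{C}$, $l\ge N-1$, $\mu=(\mu_1,\ldots,\mu_{N-1})$ and $\lambda=(\lambda_1,\ldots,\lambda_l)$. Then \[ \Delta(\mu,\lambda)^{-\kappa}\, D_{\mu_{N-1}}(-\kappa)\cdots D_{\mu_1}(-\kappa)\,\Delta(\mu,\lambda)^{\kappa}=\kappa^{N-1}Z_1(\mu,\lambda), \] where $Z_1(\mu,\lambda)$ is the coefficient of $x_1\cdots x_l$ in \[ \frac{1}{(l-N+1)!}\prod_{j=1}^l\Big(\sum_{i=1}^{N-1}\frac{x_i}{\mu_i-\lambda_j}+x_N+\cdots+x_l\Big). \]
   Context: $\Delta(\mu,\lambda)=\prod_{i,j}(\mu_i-\lambda_j)$, which is symmetric in $\mu$. The rational Dunkl operators in $\mu$ are $D_{\mu_i}(c)=\partial_{\mu_i}+c\sum_{j\neq i}\frac{1}{\mu_i-\mu_j}(1-s_{ij})$, $s_{ij}$ exchanging $\mu_i,\mu_j$. They are applied successively (first $D_{\mu_1}$) to functions of the form $\Delta(\mu,\lambda)^\kappa R(\mu)$ with $R$ rational, where $\Delta(\mu,\lambda)^\kappa$ is a fixed branch and $s_{ij}(\Delta(\mu,\lambda)^\kappa R)=\Delta(\mu,\lambda)^\kappa s_{ij}(R)$. *)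

(* Defs.v *)
(* rational functions in the variables mu_1..mu_n, n = N-1,
   over an algebraically closed numeric field C (e.g. the complex numbers),
   represented as the fraction field of multivariate polynomials. *)
From HB Require Import structures.
From mathcomp Require Import all_boot all_order all_algebra all_fingroup.
From mathcomp Require Import generic_quotient fraction.
From mathcomp Require Import mpoly.
Set Implicit Arguments. Unset Strict Implicit. Unset Printing Implicit Defensive.
Import GRing.Theory Num.Theory.
Local Open Scope ring_scope.
Local Open Scope quotient_scope.
Local Notation "x %:F" := (@FracField.tofrac _ x).
Local Notation "p ^`M ( i )" := (mderiv i p).

Section RatFun.
Variables (C : numClosedFieldType) (n : nat).

Definition ratfun := {fraction {mpoly C[n]}}.

Definition muF (i : 'I_n) : ratfun := ('X_i : {mpoly C[n]})%:F.
Definition cstF (a : C) : ratfun := (a%:MP : {mpoly C[n]})%:F.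

Definition fderiv (i : 'I_n) (f : ratfun) : ratfun :=
  let r := repr f in
  ((\n_r)^`M(i) * \d_r - \n_r * (\d_r)^`M(i))%:F / ((\d_r) ^+ 2)%:F.

Definition fsym (s : 'S_n) (f : ratfun) : ratfun :=
  let r := repr f in (msym s \n_r)%:F / (msym s \d_r)%:F.

Definition fswap (i j : 'I_n) (f : ratfun) : ratfun := fsym (tperm i j) f.

Definition DeltaF (l : nat) (lam : 'I_l -> C) : ratfun :=
  \prod_(i < n) \prod_(j < l) (muF i - cstF (lam j)).

(* Action of the rational Dunkl operator D_{mu_i}(c) on functions of the form
   Delta^kappa R, with R rational: the function Delta^kappa R is encoded by R.
   Since s_{ik}(Delta^kappa R) = Delta^kappa s_{ik}(R) and
   d/dmu_i (Delta^kappa R) = Delta^kappa (kappa R (d_i Delta)/Delta + d_i R),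
   D_{mu_i}(c)(Delta^kappa R) = Delta^kappa (dunklK ... R). *)
Definition dunklK (l : nat) (lam : 'I_l -> C) (kappa c : C) (i : 'I_n)
    (R : ratfun) : ratfun :=
  cstF kappa * R * (fderiv i (DeltaF lam) / DeltaF lam) + fderiv i R
  + cstF c * \sum_(k < n | k != i) (R - fswap i k R) / (muF i - muF k).

(* D_{mu_{n}} ... D_{mu_1} applied (first D_{mu_1}) to Delta^kappa R,
   returning the rational factor in front of Delta^kappa. *)
Definition dunkl_chain (l : nat) (lam : 'I_l -> C) (kappa c : C)
    (R : ratfun) : ratfun :=
  foldl (fun acc (i : 'I_n) => dunklK lam kappa c i acc) R (enum 'I_n).

End RatFun.

(* Z_1(mu, lambda): coefficient of x_1 ... x_l in
   1/(l-n)! * prod_{j} ( sum_{i<n} x_i/(mu_i - lambda_j) + x_{n+1} + ... + x_l ),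
   a polynomial in x_1..x_l with rational-function coefficients. *)
Definition Zweight (C : numClosedFieldType) (n l : nat) (lam : 'I_l -> C)
    (j : 'I_l) (i : 'I_l) : ratfun C n :=
  match @insub nat (fun k => (k < n)%N) 'I_n (val i) with
  | Some i' => (@muF C n i' - @cstF C n (lam j))^-1
  | None => 1
  end.

Definition Zpoly (C : numClosedFieldType) (n l : nat) (lam : 'I_l -> C)
    : {mpoly (ratfun C n)[l]} :=
  ((l - n)`!%:R)^-1 *:
    \prod_(j < l) \sum_(i < l) @Zweight C n l lam j i *: 'X_i.

Definition Z1 (C : numClosedFieldType) (n l : nat) (lam : 'I_l -> C)
    : ratfun C n :=
  (@Zpoly C n l lam)@_[multinom 1%N | i < l].

(* Main.v *)
Require Import Defs.
From HB Require Import structures.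
From mathcomp Require Import all_boot all_order all_algebra all_fingroup.
From mathcomp Require Import generic_quotient fraction.
From mathcomp Require Import mpoly.
From mathcomp Require Import ring.
Import GRing.Theory Num.Theory.
Local Open Scope ring_scope.
Local Open Scope quotient_scope.
Local Notation "x %:F" := (@FracField.tofrac _ x).
Local Notation "p ^`M ( i )" := (mderiv i p).
Local Notation fsym := Defs.fsym.

Lemma frac_repr (R : idomainType) (f : {fraction R}) :
  f = (\n_(repr f))%:F / (\d_(repr f))%:F.
Proof.
set r := repr f.
have hd : \d_r != 0 by apply: denom_ratioP.
apply: (@mulIf _ (\d_r)%:F); first by rewrite tofrac_eq0.
rewrite mulfVK ?tofrac_eq0 //.
rewrite -[f]reprK -/r.
rewrite !piE; apply/eqmodP; rewrite /= FracField.equivfE /FracField.mulf.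
rewrite !(numer_Ratio, denom_Ratio) ?mulf_neq0 ?oner_eq0 //.
by rewrite !mulr1 mulrC.
Qed.

Arguments frac_repr {R}.

Lemma frac_ex (R : idomainType) (f : {fraction R}) :
  exists p q, q != 0 /\ f = p%:F / q%:F.
Proof. exists (\n_(repr f)), (\d_(repr f)); split; [exact: denom_ratioP|exact: frac_repr]. Qed.

Lemma frac_eq (R : idomainType) (a b c d : R) : b != 0 -> d != 0 ->
  a%:F / b%:F = c%:F / d%:F -> a * d = c * b.
Proof.
move=> hb hd /eqP; rewrite eqr_div ?tofrac_eq0 // => /eqP.
by rewrite -!tofracM => /eqP; rewrite tofrac_eq => /eqP.
Qed.

Arguments frac_ex {R}.
Arguments frac_eq {R a b c d}.

Lemma inv_lemma (F : fieldType) (x v a : F) : x != 0 -> a / x + x * v = 0 -> v = - a / x ^+ 2.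
Proof.
move=> hx h.
have -> : v = (a / x + x * v - a / x) / x by field.
by rewrite h; field.
Qed.

Section RF.
Variables (C : numClosedFieldType) (n : nat).
Local Notation RF := (ratfun C n).
Local Notation P := {mpoly C[n]}.

Lemma fderiv_frac i (p q : P) : q != 0 ->
  fderiv i (p%:F / q%:F) = (p^`M(i) * q - p * q^`M(i))%:F / (q ^+ 2)%:F.
Proof.
move=> hq; rewrite /fderiv.
set f := p%:F / q%:F.
have := frac_repr f; set r := repr f => hf.
have hd : \d_r != 0 by apply: denom_ratioP.
have E1 : \n_r * q = p * \d_r by apply: frac_eq => //; rewrite -hf.
have E2 := congr1 (mderiv i) E1; rewrite !mderivM in E2.
have key : (\n_r^`M(i) * \d_r - \n_r * \d_r^`M(i)) * q ^+ 2
         = (p^`M(i) * q - p * q^`M(i)) * \d_r ^+ 2.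
  have -> : (\n_r^`M(i) * \d_r - \n_r * \d_r^`M(i)) * q ^+ 2
     = (p^`M(i) * q - p * q^`M(i)) * \d_r ^+ 2
       + \d_r * q * ((\n_r^`M(i) * q + \n_r * q^`M(i)) - (p^`M(i) * \d_r + p * \d_r^`M(i)))
       - (\d_r^`M(i) * q + q^`M(i) * \d_r) * (\n_r * q - p * \d_r) by ring.
  rewrite E1 E2 !subrr !mulr0 addr0 subr0 //.
apply/eqP; rewrite eqr_div ?tofrac_eq0 ?expf_neq0 //.
by rewrite -!tofracM key.
Qed.

Lemma fderiv_tofrac i (p : P) : fderiv i p%:F = (p^`M(i))%:F.
Proof.
have -> : p%:F = p%:F / (1 : P)%:F by rewrite tofrac1 divr1.
rewrite fderiv_frac ?oner_eq0 // mderivC.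
by rewrite expr1n tofrac1 divr1 mulr1 mulr0 subr0.
Qed.

Lemma fderiv0 i : fderiv i (0 : RF) = 0.
Proof. by rewrite -tofrac0 fderiv_tofrac mderiv0 tofrac0. Qed.

Lemma fderiv1 i : fderiv i (1 : RF) = 0.
Proof. by rewrite -tofrac1 fderiv_tofrac -(mpolyC1) mderivC tofrac0. Qed.

Lemma fderivD i (x y : RF) : fderiv i (x + y) = fderiv i x + fderiv i y.
Proof.
have [p [q [hq ->]]] := frac_ex x; have [r [t [ht ->]]] := frac_ex y.
have hq' : q%:F != 0 :> RF by rewrite tofrac_eq0.
have ht' : t%:F != 0 :> RF by rewrite tofrac_eq0.
have hq2 : (q ^+ 2)%:F != 0 :> RF by rewrite tofrac_eq0 expf_neq0.
have ht2 : (t ^+ 2)%:F != 0 :> RF by rewrite tofrac_eq0 expf_neq0.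
have hqt : q * t != 0 by rewrite mulf_neq0.
have hqt2 : ((q * t) ^+ 2)%:F != 0 :> RF by rewrite tofrac_eq0 expf_neq0.
rewrite (addf_div _ _ hq' ht') -!tofracM -tofracD.
rewrite !fderiv_frac // (addf_div _ _ hq2 ht2).
rewrite -!tofracM -tofracD; apply/eqP; rewrite eqr_div ?tofrac_eq0 ?mulf_neq0 ?expf_neq0 //.
rewrite -!tofracM tofrac_eq; apply/eqP.
rewrite !mderivD !mderivM; ring.
Qed.

Lemma fderivM i (x y : RF) : fderiv i (x * y) = fderiv i x * y + x * fderiv i y.
Proof.
have [p [q [hq ->]]] := frac_ex x; have [r [t [ht ->]]] := frac_ex y.
have hq' : q%:F != 0 :> RF by rewrite tofrac_eq0.
have ht' : t%:F != 0 :> RF by rewrite tofrac_eq0.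
have hq2 : (q ^+ 2 * t)%:F != 0 :> RF by rewrite tofrac_eq0 mulf_neq0 ?expf_neq0.
have ht2 : (q * t ^+ 2)%:F != 0 :> RF by rewrite tofrac_eq0 mulf_neq0 ?expf_neq0.
have hqt : q * t != 0 by rewrite mulf_neq0.
have hqt2 : ((q * t) ^+ 2)%:F != 0 :> RF by rewrite tofrac_eq0 expf_neq0.
rewrite mulf_div -!tofracM.
rewrite !fderiv_frac // !mulf_div -!tofracM (addf_div _ _ hq2 ht2).
rewrite -!tofracM -tofracD; apply/eqP; rewrite eqr_div ?tofrac_eq0 ?mulf_neq0 ?expf_neq0 //.
rewrite -!tofracM tofrac_eq; apply/eqP.
rewrite !mderivM; ring.
Qed.

Lemma fderivV i (x : RF) : fderiv i (x^-1) = - fderiv i x / x ^+ 2.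
Proof.
have [->|hx] := eqVneq x 0; first by rewrite invr0 fderiv0 oppr0 mul0r.
have := fderiv1 i; rewrite -(divff hx) fderivM.
move: (fderiv i x) (fderiv i x^-1) => a v h.
by apply: inv_lemma => //; rewrite -h.
Qed.

Lemma msym_inj (s : 'S_n) : injective (msym s : P -> P).
Proof.
move=> p q /(congr1 (msym s^-1)); rewrite -!msymMm mulgV !msym1m //.
Qed.

Lemma msym_neq0 (s : 'S_n) (q : P) : q != 0 -> msym s q != 0.
Proof. by apply: contraNneq => h; apply/eqP/(@msym_inj s); rewrite h msym0. Qed.

Lemma fsym_frac (s : 'S_n) (p q : P) : q != 0 ->
  fsym s (p%:F / q%:F) = (msym s p)%:F / (msym s q)%:F.
Proof.
move=> hq; rewrite /fsym.
set f := p%:F / q%:F.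
have := frac_repr f; set r := repr f => hf.
have hd : \d_r != 0 by apply: denom_ratioP.
have E1 : \n_r * q = p * \d_r by apply: frac_eq => //; rewrite -hf.
have E2 := congr1 (msym s) E1; rewrite !msymM in E2.
apply/eqP; rewrite eqr_div ?tofrac_eq0 ?msym_neq0 //.
by rewrite -!tofracM E2 mulrC.
Qed.

Lemma fsym_tofrac (s : 'S_n) (p : P) : fsym s p%:F = (msym s p)%:F.
Proof.
have -> : p%:F = p%:F / (1 : P)%:F by rewrite tofrac1 divr1.
by rewrite fsym_frac ?oner_eq0 // msym1 tofrac1 !divr1.
Qed.

Lemma fsymD (s : 'S_n) (x y : RF) : fsym s (x + y) = fsym s x + fsym s y.
Proof.
have [p [q [hq ->]]] := frac_ex x; have [r [t [ht ->]]] := frac_ex y.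
have hq' : q%:F != 0 :> RF by rewrite tofrac_eq0.
have ht' : t%:F != 0 :> RF by rewrite tofrac_eq0.
rewrite (addf_div _ _ hq' ht') -!tofracM -tofracD.
have hq2 : (msym s q)%:F != 0 :> RF by rewrite tofrac_eq0 msym_neq0.
have ht2 : (msym s t)%:F != 0 :> RF by rewrite tofrac_eq0 msym_neq0.
rewrite !fsym_frac ?mulf_neq0 // (addf_div _ _ hq2 ht2).
by rewrite msymD !msymM -!tofracM -tofracD.
Qed.

Lemma fsymM (s : 'S_n) (x y : RF) : fsym s (x * y) = fsym s x * fsym s y.
Proof.
have [p [q [hq ->]]] := frac_ex x; have [r [t [ht ->]]] := frac_ex y.
rewrite mulf_div -!tofracM.
rewrite !fsym_frac ?mulf_neq0 // mulf_div.
by rewrite !msymM -!tofracM.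
Qed.

Lemma fsymV (s : 'S_n) (x : RF) : fsym s (x^-1) = (fsym s x)^-1.
Proof.
have [p [q [hq ->]]] := frac_ex x.
have [->|hp] := eqVneq p 0.
  by rewrite tofrac0 !mul0r invr0 -(divr1 0) -tofrac1 -tofrac0 fsym_frac ?oner_eq0 // msym0 tofrac0 !mul0r invr0.
by rewrite invf_div !fsym_frac // invf_div.
Qed.

End RF.

Set Implicit Arguments. Unset Strict Implicit. Unset Printing Implicit Defensive.

Definition wt (F : pzRingType) l (row : nat -> 'I_l -> F) m j (i : 'I_l) : F :=
  if (i < m)%N then row i j else 1.
Definition TT (F : pzRingType) l (row : nat -> 'I_l -> F) m : F :=
  \sum_(s : 'S_l) \prod_(j < l) wt row m j (s j).

Section Comb.
Variables (F : comNzRingType) (l : nat).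
Implicit Types (row : nat -> 'I_l -> F).

Lemma wt_swap row m (k k' : 'I_l) j x : (m <= k)%N -> (m <= k')%N ->
  wt row m j (tperm k k' x) = wt row m j x.
Proof.
move=> hk hk'; rewrite /wt; case: tpermP => [->|->|//].
  by rewrite !ltnNge hk' hk.
by rewrite !ltnNge hk' hk.
Qed.

Lemma TT_part row m (k m0 : 'I_l) : (m <= k)%N -> val m0 = m ->
  \sum_(s : 'S_l) (\prod_(j < l) wt row m j (s j)) * row m ((s^-1)%g k)
  = \sum_(s : 'S_l) (\prod_(j < l) wt row m j (s j)) * row m ((s^-1)%g m0).
Proof.
move=> hk hm0.
rewrite (reindex_inj (mulIg (tperm k m0))) /=.
apply: eq_bigr => s _; congr (_ * _).
  by apply: eq_bigr => j _; rewrite permM wt_swap // hm0.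
by rewrite invMg tpermV permM tpermL.
Qed.

Lemma TT_succ row m (m0 : 'I_l) : val m0 = m ->
  TT row m.+1 = \sum_(s : 'S_l) (\prod_(j < l) wt row m j (s j)) * row m ((s^-1)%g m0).
Proof.
move=> hm0; apply: eq_bigr => s _.
rewrite (bigD1 ((s^-1)%g m0)) //= [in RHS](bigD1 ((s^-1)%g m0)) //= (permKV s m0).
rewrite /wt hm0 ltnn ltnSn mul1r mulrC; congr (_ * _).
apply: eq_bigr => j hj.
have : s j != m0 by apply: contra hj => /eqP <-; rewrite permK.
rewrite -(inj_eq val_inj) hm0 => hne.
by rewrite ltnS leq_eqVlt (negbTE hne).
Qed.

Lemma card_ge m : (m <= l)%N ->
  \sum_(k < l | ~~ (k < m)%N) (1 : F) = (l - m)%:R.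
Proof.
move=> hm.
rewrite -(big_mkord (fun k => ~~ (k < m)%N) (fun _ => (1 : F))).
rewrite (@big_cat_nat _ _ _ m 0 l _ _ (leq0n m) hm) /= big_nat_cond big1; last first.
  by move=> i /andP [/andP [_ ->]].
rewrite add0r big_nat_cond (eq_bigl (fun i => (m <= i < l)%N && true)); last first.
  by move=> i; rewrite -leqNgt; case/boolP: (m <= i)%N => //= h; rewrite ?andbT ?andbF.
by rewrite -big_nat_cond sumr_const_nat.
Qed.

Lemma TT_mul row m (m0 : 'I_l) : val m0 = m ->
  TT row m * \sum_(j < l) row m j
  = (l - m)%:R * TT row m.+1
    + \sum_(k < l | (k < m)%N) \sum_(s : 'S_l)
        (\prod_(j < l) wt row m j (s j)) * row m ((s^-1)%g k).
Proof.
move=> hm0.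
have hml : (m <= l)%N by rewrite -hm0; exact: ltnW (ltn_ord m0).
rewrite /TT mulr_suml.
have hsplit : forall s : 'S_l, \sum_(j < l) row m j =
    \sum_(k < l | (k < m)%N) row m ((s^-1)%g k) + \sum_(k < l | ~~ (k < m)%N) row m ((s^-1)%g k).
  by move=> s; rewrite (reindex_inj (@perm_inj _ (s^-1)%g)) /= (bigID (fun k : 'I_l => (k < m)%N)).
under eq_bigr => s _ do rewrite (hsplit s) mulrDr.
rewrite big_split /= addrC; congr (_ + _).
  rewrite (eq_bigr (fun s : 'S_l => \sum_(k < l | ~~ (k < m)%N)
     (\prod_(j < l) wt row m j (s j)) * row m ((s^-1)%g k))); last first.
    by move=> s _; rewrite mulr_sumr.
  rewrite exchange_big /=.
  set U := \sum_(s : 'S_l) (\prod_(j < l) wt row m j (s j)) * row m ((s^-1)%g m0).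
  rewrite (eq_bigr (fun _ => 1 * U)); last first.
    by move=> k hk; rewrite mul1r /U (TT_part row (k := k) (m0 := m0)) // leqNgt.
  by rewrite -big_distrl /= card_ge // -/(TT row m.+1) (TT_succ row hm0).
rewrite (eq_bigr (fun s : 'S_l => \sum_(k < l | (k < m)%N)
   (\prod_(j < l) wt row m j (s j)) * row m ((s^-1)%g k))); last first.
  by move=> s _; rewrite mulr_sumr.
by rewrite exchange_big.
Qed.


Lemma TT_diff row m (kk : 'I_l) (d : F) : (kk < m)%N ->
  (forall j, row kk j * row m j * d = row kk j - row m j) ->
  \sum_(s : 'S_l) (\prod_(j < l) wt row m j (s j)) * row m ((s^-1)%g kk) * d
  = TT row m - TT (fun i j => if i == val kk then row m j else row i j) m.
Proof.
move=> hk hrel; rewrite /TT -sumrB; apply: eq_bigr => s _.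
rewrite (bigD1 ((s^-1)%g kk)) //= [X in _ = _ - X](bigD1 ((s^-1)%g kk)) //= (permKV s kk).
rewrite /wt hk eqxx.
set P := \prod_(i < l | _) _.
set P' := \prod_(i < l | _) _.
have -> : P' = P.
  apply: eq_bigr => j hj.
  have : s j != kk by apply: contra hj => /eqP <-; rewrite permK.
  by rewrite -(inj_eq val_inj) => /negbTE ->.
set a := row kk _; set b := row m _.
have h := hrel ((s^-1)%g kk); rewrite -/a -/b in h.
have -> : a * P * b * d = P * (a * b * d) by ring.
by rewrite h; ring.
Qed.

End Comb.

Lemma coef_prod (K : comNzRingType) (l : nat) (w : 'I_l -> 'I_l -> K) :
  (\prod_(j < l) \sum_(i < l) w j i *: ('X_i : {mpoly K[l]}))@_[multinom 1%N | i < l]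
  = \sum_(s : 'S_l) \prod_(j < l) w j (s j).
Proof.
rewrite bigA_distr_bigA /= raddf_sum /=.
have hterm : forall f : {ffun 'I_l -> 'I_l},
   \prod_(j < l) (w j (f j) *: ('X_(f j) : {mpoly K[l]}))
   = (\prod_(j < l) w j (f j)) *: 'X_[\sum_(j < l) U_(f j)%MM].
  move=> f.
  rewrite (big_morph (fun m => ('X_[m] : {mpoly K[l]})) (@mpolyXD _ _) (@mpolyX0 _ _)).
  rewrite -mul_mpolyC rmorph_prod -big_split /=.
  by apply: eq_bigr => j _; rewrite mul_mpolyC.
under eq_bigr => f _ do rewrite hterm mcoeffZ mcoeffX.
rewrite (bigID (fun f : {ffun 'I_l -> 'I_l} => injectiveb f)) /=.
rewrite [X in _ + X]big1 ?addr0; last first.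
  move=> f /injectivePn [a [b hab hf]].
  suff -> : (\sum_(j < l) U_(f j) == [multinom 1%N | i < l])%MM = false by rewrite mulr0.
  apply/negbTE/negP => /eqP /(congr1 (fun mm : 'X_{1..l} => mm (f a))).
  rewrite mnmE mnm_sumE (bigD1 a) //= (bigD1 b) 1?eq_sym //= !mnmE hf eqxx.
  by rewrite add1n addSn.
rewrite (@reindex _ _ _ _ _ (fun s : 'S_l => pval s) (fun f : {ffun 'I_l -> 'I_l} => injectiveb f)) /=; last first.
  exists (fun f => insubd (1%g : 'S_l) f) => [s _|f hf].
    by rewrite valKd.
  by rewrite insubdK.
rewrite (eq_bigl xpredT); last by move=> s; exact: (valP s).
apply: eq_bigr => s _.
have hp : forall x, pval s x = s x by move=> x; rewrite -pvalE.
under eq_bigr => j _ do rewrite hp.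
under [X in (X == _)]eq_bigr => j _ do rewrite hp.
rewrite (_ : (_ == _) = true) ?mulr1 //.
apply/eqP; apply/mnmP => i; rewrite mnmE mnm_sumE (bigD1 ((s^-1)%g i)) //=.
rewrite mnmE (permKV s i) eqxx big1 // => j hj.
rewrite mnmE.
by apply/eqP; rewrite eqb0; apply: contra hj => /eqP <-; rewrite permK.
Qed.

Set Implicit Arguments. Unset Strict Implicit. Unset Printing Implicit Defensive.

Lemma rel_lemma (F : fieldType) (x y c : F) : x - c != 0 -> y - c != 0 ->
  (x - c)^-1 * (y - c)^-1 * (y - x) = (x - c)^-1 - (y - c)^-1.
Proof.
move=> hx hy; have -> : y - x = (y - c) - (x - c) by ring.
move: (x - c) (y - c) hx hy => a b ha hb; by field; rewrite ?ha ?hb.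
Qed.

Lemma logstep (F : fieldType) (f f' y1 y2 : F) : f != 0 ->
  f' * y1 + f * (y1 * y2) = (f * y1) * (f' / f + y2).
Proof. by move=> hf; field; rewrite hf. Qed.

Lemma sum_ord_cut (V : nmodType) p m (G : nat -> V) : (m <= p)%N ->
  \sum_(k < p | (k < m)%N) G k = \sum_(k < m) G k.
Proof.
by move=> h; rewrite (big_ord_widen_cond p xpredT G h); apply: eq_bigl.
Qed.

Section Conc.
Variables (C : numClosedFieldType) (n : nat).
Local Notation RF := (ratfun C n).
Local Notation P := {mpoly C[n]}.

Lemma fsym0 (s : 'S_n) : fsym s (0 : RF) = 0.
Proof. by rewrite -tofrac0 fsym_tofrac msym0. Qed.

Lemma fsym1 (s : 'S_n) : fsym s (1 : RF) = 1.
Proof. by rewrite -tofrac1 fsym_tofrac msym1. Qed.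

Lemma fsymN (s : 'S_n) (x : RF) : fsym s (- x) = - fsym s x.
Proof.
apply/eqP; rewrite -subr_eq0 opprK -fsymD addNr.
by rewrite fsym0.
Qed.

Lemma fsymB (s : 'S_n) (x y : RF) : fsym s (x - y) = fsym s x - fsym s y.
Proof. by rewrite fsymD fsymN. Qed.

Lemma fsym_sum (s : 'S_n) (I : finType) (F : I -> RF) :
  fsym s (\sum_i F i) = \sum_i fsym s (F i).
Proof. by elim/big_rec2: _ => [|i a b _ <-]; rewrite ?fsym0 ?fsymD. Qed.

Lemma fsym_prod (s : 'S_n) (I : finType) (F : I -> RF) :
  fsym s (\prod_i F i) = \prod_i fsym s (F i).
Proof. by elim/big_rec2: _ => [|i a b _ <-]; rewrite ?fsym1 ?fsymM. Qed.

Lemma fsym_muF (s : 'S_n) (i : 'I_n) : fsym s (muF C i) = muF C (s i).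
Proof.
rewrite /muF fsym_tofrac msymX; congr (_ %:F); congr ('X_[_]).
apply/mnmP => j; rewrite !mnmE; congr (nat_of_bool _).
apply/eqP/eqP => [->|<-]; first by rewrite permKV.
by rewrite permK.
Qed.

Lemma fsym_cstF (s : 'S_n) (c : C) : fsym s (cstF n c) = cstF n c.
Proof. by rewrite /cstF fsym_tofrac /msym mmapC. Qed.

Lemma fderivN i (x : RF) : fderiv i (- x) = - fderiv i x.
Proof.
apply/eqP; rewrite -subr_eq0 opprK -fderivD addNr.
by rewrite fderiv0.
Qed.

Lemma fderivB i (x y : RF) : fderiv i (x - y) = fderiv i x - fderiv i y.
Proof. by rewrite fderivD fderivN. Qed.

Lemma fderiv_muF (i k : 'I_n) : fderiv i (muF C k) = (k == i)%:R.
Proof.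
rewrite /muF fderiv_tofrac mderivX mnmE.
have [->|hki] := eqVneq k i.
  have -> : (U_(i) - U_(i))%MM = 0%MM by apply/mnmP => j; rewrite !mnmE subnn.
  by rewrite /= mpolyX0 scale1r tofrac1.
by rewrite /= scale0r tofrac0.
Qed.

Lemma fderiv_cstF (i : 'I_n) (c : C) : fderiv i (cstF n c) = 0.
Proof. by rewrite /cstF fderiv_tofrac mderivC tofrac0. Qed.

Lemma cstFM (a b : C) : cstF n (a * b) = cstF n a * cstF n b.
Proof. by rewrite /cstF mpolyCM tofracM. Qed.

Lemma cstFN (a : C) : cstF n (- a) = - cstF n a.
Proof. by rewrite /cstF mpolyCN tofracN. Qed.

Lemma cstF_nat k : cstF n (k%:R : C) = k%:R.
Proof. by rewrite /cstF rmorph_nat rmorph_nat. Qed.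

Lemma muF_cst_neq0 (i : 'I_n) (c : C) : muF C i - cstF n c != 0.
Proof.
rewrite /muF /cstF -tofracB tofrac_eq0; apply/eqP => /(congr1 (mcoeff U_(i))).
rewrite mcoeffB mcoeffX mcoeffC mnm1_eq0 eqxx mulr0 subr0 mcoeff0 => /eqP.
by rewrite oner_eq0.
Qed.

Lemma muF_muF_neq0 (i k : 'I_n) : i != k -> muF C i - muF C k != 0.
Proof.
move=> hik; rewrite /muF -tofracB tofrac_eq0; apply/eqP => /(congr1 (mcoeff U_(i))).
rewrite mcoeffB !mcoeffX eqxx eq_mnm1 eq_sym (negbTE hik) subr0 mcoeff0 => /eqP.
by rewrite oner_eq0.
Qed.

End Conc.

Set Implicit Arguments. Unset Strict Implicit. Unset Printing Implicit Defensive.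

Lemma divcancel (F : fieldType) (s x : F) : x != 0 -> x * s / x = s.
Proof. by move=> h; rewrite mulrC mulKf. Qed.

Lemma alg1 (F : comNzRingType) (a b t s h u e : F) : t * s = e * u + h ->
  a * (b * t) * s + (0 * t + b * 0) + (- a) * (b * h) = (a * b * e) * u.
Proof.
move=> E; have -> : a * (b * t) * s = a * b * (t * s) by ring.
by rewrite E; ring.
Qed.

Lemma alg2 (F : fieldType) (k x y : F) (m : nat) : x != 0 -> y != 0 ->
  k * (k ^+ m / (x * y)) * x = k ^+ m.+1 / y.
Proof. by move=> hx hy; rewrite exprS; field; rewrite ?hx ?hy. Qed.

Lemma inv_uniq (F : fieldType) (x y : F) : x * y = 1 -> y = x^-1.
Proof.
move=> h; have hx : x != 0 by apply/eqP => hx; move: h; rewrite hx mul0r => /eqP; rewrite eq_sym oner_eq0.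
by rewrite -[y]mul1r -(mulVf hx) -mulrA h mulr1.
Qed.

Section Main.
Variables (C : numClosedFieldType) (n l : nat) (lam : 'I_l -> C).
Local Notation RF := (ratfun C n).
Local Notation P := {mpoly C[n]}.

Definition rowF (i : nat) (j : 'I_l) : RF :=
  match @insub nat (fun k => (k < n)%N) 'I_n i with
  | Some i' => (muF C i' - cstF n (lam j))^-1
  | None => 1
  end.

Lemma rowF_ord (i : 'I_n) j : rowF i j = (muF C i - cstF n (lam j))^-1.
Proof. by rewrite /rowF valK. Qed.

Lemma logder (I : finType) (i0 : 'I_n) (f : I -> RF) : (forall x, f x != 0) ->
  fderiv i0 (\prod_x f x) = (\prod_x f x) * \sum_x fderiv i0 (f x) / f x.
Proof.
move=> hf.
elim/big_rec2: _ => [|x y1 y2 _ ih]; first by rewrite fderiv1 mulr0.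
by rewrite fderivM ih (logstep _ _ _ (hf x)).
Qed.

Lemma logDelta (i0 : 'I_n) :
  fderiv i0 (DeltaF n lam) / DeltaF n lam = \sum_j rowF i0 j.
Proof.
have hnz : forall i j, muF C i - cstF n (lam j) != 0 by move=> i j; exact: muF_cst_neq0.
have hin : forall i : 'I_n, \prod_(j < l) (muF C i - cstF n (lam j)) != 0.
  by move=> i; apply/prodf_neq0 => j _; exact: hnz.
have hD : DeltaF n lam != 0 by rewrite /DeltaF; apply/prodf_neq0 => i _; exact: hin.
rewrite {1}/DeltaF logder // -/(DeltaF n lam) (divcancel _ hD).
under eq_bigr => i _ do rewrite logder // (divcancel _ (hin i)).
rewrite (bigD1 i0) //= [X in _ + X]big1 ?addr0 => [|i hi]; last first.
  apply: big1 => j _; rewrite fderivB fderiv_muF fderiv_cstF subr0.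
  by rewrite (negbTE hi) mul0r.
apply: eq_bigr => j _; rewrite fderivB fderiv_muF fderiv_cstF subr0 eqxx mul1r.
by rewrite rowF_ord.
Qed.

Lemma fderiv_TT (i0 : 'I_n) m : (m <= i0)%N -> fderiv i0 (TT rowF m) = 0.
Proof.
move=> hm; rewrite /TT.
apply: (big_ind (fun x => fderiv i0 x = 0)) => [|x y hx hy|s _].
- exact: fderiv0.
- by rewrite fderivD hx hy addr0.
apply: (big_ind (fun x => fderiv i0 x = 0)) => [|x y hx hy|j _].
- exact: fderiv1.
- by rewrite fderivM hx hy mul0r mulr0 addr0.
rewrite /wt; case: ifP => hlt; last exact: fderiv1.
have hn : (s j < n)%N.
  by apply: leq_trans hlt (leq_trans hm (ltnW (ltn_ord i0))).
have -> : rowF (s j) j = rowF (val (Ordinal hn)) j by [].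
rewrite rowF_ord fderivV fderivB fderiv_muF fderiv_cstF subr0.
have -> : (Ordinal hn == i0) = false.
  apply/negbTE; rewrite -(inj_eq val_inj) /= neq_ltn.
  by rewrite (leq_trans hlt hm).
by rewrite oppr0 mul0r.
Qed.

Lemma fsym_TT (s : 'S_n) (row : nat -> 'I_l -> RF) m :
  fsym s (TT row m) = TT (fun i j => fsym s (row i j)) m.
Proof.
rewrite /TT fsym_sum; apply: eq_bigr => t _; rewrite fsym_prod.
by apply: eq_bigr => j _; rewrite /wt; case: ifP => // _; exact: fsym1.
Qed.

Lemma TT_eq (row row' : nat -> 'I_l -> RF) m :
  (forall i j, (i < m)%N -> row i j = row' i j) -> TT row m = TT row' m.
Proof.
move=> h; apply: eq_bigr => s _; apply: eq_bigr => j _.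
by rewrite /wt; case: ifP => // hi; exact: h.
Qed.

Lemma fsym_rowF (s : 'S_n) i j (hi : (i < n)%N) :
  fsym s (rowF i j) = rowF (s (Ordinal hi)) j.
Proof.
have -> : rowF i j = rowF (val (Ordinal hi)) j by [].
by rewrite !rowF_ord fsymV fsymB fsym_muF fsym_cstF.
Qed.

Definition Hs m (kk : 'I_l) : RF :=
  \sum_(s : 'S_l) (\prod_(j < l) wt rowF m j (s j)) * rowF m ((s^-1)%g kk).

Lemma swap_sum (i0 : 'I_n) (m0 : 'I_l) m (c : C) : val i0 = m -> val m0 = m ->
  \sum_(k < n | k != i0)
     (cstF n c * TT rowF m - fswap i0 k (cstF n c * TT rowF m)) / (muF C i0 - muF C k)
  = cstF n c * \sum_(kk < l | (kk < m)%N) Hs m kk.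
Proof.
move=> hi0 hm0.
rewrite (bigID (fun k : 'I_n => (k < m)%N)) /=.
rewrite [X in _ + X]big1 ?addr0; last first.
  move=> k /andP [hk hkm].
  suff -> : fswap i0 k (cstF n c * TT rowF m) = cstF n c * TT rowF m by rewrite subrr mul0r.
  rewrite /fswap fsymM fsym_cstF fsym_TT; congr (_ * _); apply: TT_eq => i j hi.
  have hin : (i < n)%N by apply: (leq_trans hi); rewrite -hi0; exact: ltnW (ltn_ord i0).
  rewrite fsym_rowF tpermD //.
    by rewrite -(inj_eq val_inj) /= hi0 neq_ltn hi orbT.
  rewrite -(inj_eq val_inj) /= neq_ltn (leq_trans hi) ?orbT //.
  by rewrite leqNgt.
rewrite (eq_bigl (fun k : 'I_n => (k < m)%N)); last first.
  move=> k; case: (ltnP k m) => hk; rewrite ?andbT ?andbF //.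
  by rewrite -(inj_eq val_inj) hi0 neq_ltn hk.
pose G := fun k : nat => Hs m (insubd m0 k).
rewrite (eq_bigr (fun k : 'I_n => cstF n c * G k)); last first.
  move=> k hk.
  set kk := insubd m0 (val k).
  have hkl : (k < l)%N by apply: (leq_trans hk); rewrite -hm0; exact: ltnW (ltn_ord m0).
  have hkk : val kk = val k by rewrite /kk val_insubd hkl.
  have hkkm : (kk < m)%N by rewrite hkk.
  have hd : muF C i0 - muF C k != 0.
    by apply: muF_muF_neq0; rewrite -(inj_eq val_inj) /= hi0 neq_ltn hk orbT.
  have hrel : forall j, rowF kk j * rowF m j * (muF C i0 - muF C k) = rowF kk j - rowF m j.
    move=> j; rewrite hkk -hi0 !rowF_ord.
    exact: (rel_lemma (muF_cst_neq0 k (lam j)) (muF_cst_neq0 i0 (lam j))).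
  have := TT_diff hkkm hrel.
  rewrite -mulr_suml -/(Hs m kk) => hdiff.
  rewrite /fswap fsymM fsym_cstF fsym_TT -mulrBr.
  rewrite (@TT_eq (fun i j => fsym (tperm i0 k) (rowF i j)) (fun i j => if i == val kk then rowF m j else rowF i j)); last first.
    move=> i j hi.
    have hin : (i < n)%N by apply: (leq_trans hi); rewrite -hi0; exact: ltnW (ltn_ord i0).
    rewrite fsym_rowF; case: eqP => [hik|hik].
      have -> : Ordinal hin = k by apply: val_inj; rewrite /= hik.
      by rewrite tpermR hi0.
    rewrite tpermD //.
      by rewrite -(inj_eq val_inj) /= hi0 neq_ltn hi orbT.
    by rewrite -(inj_eq val_inj) /= -hkk; apply/eqP => h; apply: hik.
  by rewrite -hdiff mulrA (mulfK hd).
rewrite -mulr_sumr; congr (_ * _).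
have hmn : (m <= n)%N by rewrite -hi0; exact: ltnW (ltn_ord i0).
have hml : (m <= l)%N by rewrite -hm0; exact: ltnW (ltn_ord m0).
rewrite (sum_ord_cut G hmn) -(sum_ord_cut G hml).
by apply: eq_bigr => kk _; rewrite /G valKd.
Qed.

Lemma step (kappa : C) (i0 : 'I_n) (m0 : 'I_l) m (c : C) : val i0 = m -> val m0 = m ->
  dunklK lam kappa (- kappa) i0 (cstF n c * TT rowF m)
  = cstF n (kappa * c * (l - m)%:R) * TT rowF m.+1.
Proof.
move=> hi0 hm0.
have E : TT rowF m * \sum_(j < l) rowF m j
   = (l - m)%:R * TT rowF m.+1 + \sum_(kk < l | (kk < m)%N) Hs m kk.
  exact: (TT_mul rowF hm0).
rewrite /dunklK logDelta -hi0 fderivM fderiv_cstF fderiv_TT // hi0.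
rewrite (swap_sum _ hi0 hm0) cstFN !cstFM cstF_nat.
have hi0' : nat_of_ord i0 = m := hi0.
rewrite hi0'.
exact: (alg1 (cstF n kappa) (cstF n c) E).
Qed.

Lemma cstF1 : cstF n (1 : C) = 1.
Proof. by rewrite /cstF tofrac1. Qed.

Lemma cstFV (a : C) : cstF n a^-1 = (cstF n a)^-1.
Proof.
have [->|ha] := eqVneq a 0; first by rewrite invr0 /cstF mpolyC0 tofrac0 invr0.
by apply: inv_uniq; rewrite -cstFM mulfV // cstF1.
Qed.

Lemma TT0 : TT rowF 0 = (l`!)%:R.
Proof.
rewrite /TT (eq_bigr (fun _ => 1)) => [|s _]; last by apply: big1 => j _; rewrite /wt ltn0.
by rewrite sumr_const card_Sn.
Qed.

Lemma chain (kappa : C) m : (n <= l)%N -> (m <= n)%N ->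
  foldl (fun acc i => dunklK lam kappa (- kappa) i acc) 1 (take m (enum 'I_n))
  = cstF n (kappa ^+ m / ((l - m)`!)%:R) * TT rowF m.
Proof.
move=> hnl; elim: m => [_|m IH hm].
  rewrite take0 /= TT0 subn0 expr0 div1r -cstF_nat -cstFM mulVf ?cstF1 //.
  by rewrite pnatr_eq0 -lt0n fact_gt0.
have hmn : (m < n)%N := hm.
have hml : (m < l)%N := leq_trans hm hnl.
pose i0 := Ordinal hmn; pose m0 := Ordinal hml.
rewrite (take_nth i0) ?size_enum_ord // foldl_rcons IH ?(ltnW hm) //.
rewrite (nth_ord_enum i0 i0) (step kappa (i0 := i0) (m0 := m0)) //.
congr (_ * _); congr (cstF n _).
have hlm : (l - m = (l - m.+1).+1)%N by rewrite subnSK.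
rewrite hlm factS natrM; apply: alg2; by rewrite pnatr_eq0 // -lt0n fact_gt0.
Qed.

End Main.


Unset Implicit Arguments. Set Strict Implicit.

Theorem lemma6p2 (C : numClosedFieldType) (N l : nat) (kappa : C)
    (lam : 'I_l -> C) :
  (0 < N)%N -> (N.-1 <= l)%N ->
  dunkl_chain lam kappa (- kappa) (1 : ratfun C N.-1)
  = cstF N.-1 (kappa ^+ N.-1) * Z1 N.-1 lam.
Proof.
move=> _; move: (N.-1) => n hl.
rewrite /dunkl_chain.
have := chain lam kappa hl (leqnn n); rewrite take_oversize ?size_enum_ord // => ->.
rewrite /Z1 /Zpoly mcoeffZ coef_prod cstFM cstFV cstF_nat -mulrA.
congr (_ * (_ * _)).
apply: eq_bigr => s _; apply: eq_bigr => j _.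
rewrite /wt; case: ifP => // hs.
by rewrite /Zweight insubN // hs.
Qed.
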